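(* Consider consecutive updates to $p_j$ at times $\tau_j<t$, and suppose that between times $\tau_j$ and $t$ there are updates to coordinates $k_1,\dots,k_m$ (repetitions allowed, none equal to $j$) at times $\beta_1<\dots<\beta_m$, with $\Delta p_{k_i}$ the change made by the update at time $\beta_i$ and $\Delta t_{k_i}$ the time elapsed since the previous update of that coordinate. Let $\tilde g_{j,\max}$ and $\tilde g_{j,\min}$ be the maximum and minimum of $\nabla_j\phi(p')$ over $p'\in P_j^{[\tau_j,t]}(p_j^t)$. For positive numbers $\eta_1,\dots,\eta_m$, let $\bar\eta_k=\min_{i:k_i=k}\eta_i$ for $k\ne j$ (with the convention $1/\bar\eta_k=0$ if no $i$ has $k_i=k$). Then for every real $\mu$, $$|\mu|\,(\tilde g_{j,\max}-\tilde g_{j,\min})\le 2\mu^2\sum_{k\ne j}\frac{1}{\bar\eta_k}H_{kj}^{[\tau_j,t]}(p_j^t)+\sum_{i=1}^m\eta_i\,H_{k_ij}^{[\beta_i,t]}(p_j^t)\frac{(\Delta p_{k_i})^2}{\Delta t_{k_i}},$$ and $$(\tilde g_{j,\max}-\tilde g_{j,\min})^2\le 8\Big(\sum_{i=1}^m\eta_i\,H_{k_ij}^{[\beta_i,t]}(p_j^t)\frac{(\Delta p_{k_i})^2}{\Delta t_{k_i}}\Big)\Big(\sum_{k\ne j}\frac{1}{\bar\eta_k}H_{kj}^{[\tau_j,t]}(p_j^t)\Big).$$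
   Context: Let $\phi:\mathbb{R}^n\to\mathbb{R}$ be twice continuously differentiable and convex. Asynchronous gradient descent runs in continuous time; each coordinate is changed only at discrete update times, no two updates occur simultaneously, and consecutive updates to the same coordinate are at most one time unit apart (so each elapsed time $\Delta t\le 1$). For $t_1\le t_2$ and real $s$, $P_j^{[t_1,t_2]}(s)$ denotes the box of points $p'$ with $p'_j=s$ and, for each $k\ne j$, $p'_k$ ranging over the closed interval spanned by the values $p_k^{t'}$ of coordinate $k$ for $t'\in[t_1,t_2]$ (where $p^{t'}$ is the current point at time $t'$). For $S\subseteq\mathbb{R}^n$, $H_{k\ell}(S)=\sup_{p'\in S}|\partial^2\phi/\partial p_k\partial p_\ell(p')|$, and $H_{k\ell}^{[t_1,t_2]}(s)=H_{k\ell}(P_\ell^{[t_1,t_2]}(s))$. *)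

(* Defs.v *)
From Stdlib Require Import Reals ClassicalEpsilon.
From mathcomp Require Import ssreflect ssrbool eqtype ssrnat fintype bigop.
Open Scope R_scope.

Definition vec (n : nat) := 'I_n -> R.

Definition upd {n} (p : vec n) (j : 'I_n) (s : R) : vec n :=
  fun k => if k == j then s else p k.

Definition has_partial {n} (f : vec n -> R) (j : 'I_n) (g : vec n -> R) : Prop :=
  forall p, derivable_pt_lim (fun s => f (upd p j s)) (p j) (g p).

Definition continuous_vec {n} (f : vec n -> R) : Prop :=
  forall p eps, 0 < eps -> exists delta, 0 < delta /\
    forall q : vec n, (forall k, Rabs (q k - p k) < delta) -> Rabs (f q - f p) < eps.

Definition C2_with {n} (phi : vec n -> R) (D1 : 'I_n -> vec n -> R)
    (D2 : 'I_n -> 'I_n -> vec n -> R) : Prop :=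
  continuous_vec phi /\
  (forall k, has_partial phi k (D1 k) /\ continuous_vec (D1 k)) /\
  (forall k l, has_partial (D1 k) l (D2 k l) /\ continuous_vec (D2 k l)).

Definition convex_fun {n} (phi : vec n -> R) : Prop :=
  forall (p q : vec n) (l : R), 0 <= l <= 1 ->
    phi (fun k => l * p k + (1 - l) * q k) <= l * phi p + (1 - l) * phi q.

(* Asynchronous process: U k s means "coordinate k is updated at time s";
   p s is the current point at time s, with the convention that p s is the
   point just BEFORE any update occurring at time s (left-continuous). *)
Definition async_process {n} (U : 'I_n -> R -> Prop) (p : R -> vec n) : Prop :=
  (forall k k' s, U k s -> U k' s -> k = k') /\
  (forall k a b, exists l : list R, forall s, a <= s <= b -> U k s -> List.In s l) /\
  (forall k a b, U k a -> U k b -> a < b -> (forall s, a < s < b -> ~ U k s) ->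
     b - a <= 1) /\
  (forall k a b, a <= b -> (forall s, a <= s < b -> ~ U k s) -> p b k = p a k).

Definition sup_R (E : R -> Prop) : R := epsilon (inhabits 0) (fun l => is_lub E l).
Definition inf_R (E : R -> Prop) : R := - sup_R (fun x => E (- x)).

(* x lies in the closed interval spanned by the values p t' k, t' in [t1,t2] *)
Definition in_span {n} (p : R -> vec n) (k : 'I_n) (t1 t2 x : R) : Prop :=
  (forall c, (forall t', t1 <= t' <= t2 -> p t' k <= c) -> x <= c) /\
  (forall c, (forall t', t1 <= t' <= t2 -> c <= p t' k) -> c <= x).

Definition box {n} (p : R -> vec n) (j : 'I_n) (t1 t2 s : R) : vec n -> Prop :=
  fun p' => p' j = s /\ forall k, k != j -> in_span p k t1 t2 (p' k).

Definition Hset {n} (D2 : 'I_n -> 'I_n -> vec n -> R) (k l : 'I_n)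
    (S : vec n -> Prop) : R :=
  sup_R (fun y => exists p', S p' /\ y = Rabs (D2 k l p')).

Definition Hbox {n} (D2 : 'I_n -> 'I_n -> vec n -> R) (p : R -> vec n)
    (k l : 'I_n) (t1 t2 s : R) : R :=
  Hset D2 k l (box p l t1 t2 s).

Definition max_over {n} (g : vec n -> R) (S : vec n -> Prop) : R :=
  sup_R (fun y => exists p', S p' /\ y = g p').
Definition min_over {n} (g : vec n -> R) (S : vec n -> Prop) : R :=
  inf_R (fun y => exists p', S p' /\ y = g p').

Definition inv_etabar {n m} (kk : 'I_m -> 'I_n) (eta : 'I_m -> R) (k : 'I_n) : R :=
  match [pick i | kk i == k] with
  | Some i0 => / (\big[Rmin/eta i0]_(i | kk i == k) eta i)
  | None => 0
  end.

(* Main.v *)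
From HB Require Import structures.
Require Import Defs.
From Coquelicot Require Import Coquelicot.
From Stdlib Require Import Reals Lra Classical ClassicalEpsilon FunctionalExtensionality.
From mathcomp Require Import ssreflect ssrfun ssrbool eqtype ssrnat seq fintype bigop.
From Stdlib Require Import List.
Open Scope R_scope.

Lemma upd_same {n} (q : vec n) k s s' : upd (upd q k s) k s' = upd q k s'.
Proof. apply functional_extensionality => i; rewrite /upd; by case: (i == k). Qed.

Lemma upd_at {n} (q : vec n) k s : upd q k s k = s.
Proof. by rewrite /upd eqxx. Qed.

Lemma upd_ne {n} (q : vec n) k s i : i <> k -> upd q k s i = q i.
Proof. move=> H; rewrite /upd; case: eqP => //. Qed.

Lemma upd_comm {n} (q : vec n) c j u v : c <> j ->
  upd (upd q c u) j v = upd (upd q j v) c u.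
Proof.
move=> Hcj; apply functional_extensionality => i; rewrite /upd.
case: (eqVneq i j) => [->|Hij]; case: (eqVneq j c) => // Hjc.
by move: Hcj; rewrite Hjc.
Qed.

Lemma upd_self {n} (q : vec n) k : upd q k (q k) = q.
Proof. apply functional_extensionality => i; rewrite /upd; case: eqP => [->|] //. Qed.

Lemma partial_Derive {n} (f : vec n -> R) k g q :
  has_partial f k g -> Derive (fun s => f (upd q k s)) (q k) = g q.
Proof. move=> H; apply is_derive_unique; apply is_derive_Reals; apply H. Qed.

Lemma partial_ex {n} (f : vec n -> R) k g q :
  has_partial f k g -> ex_derive (fun s => f (upd q k s)) (q k).
Proof. move=> H; exists (g q); apply is_derive_Reals; apply H. Qed.

Lemma D2_sym {n} (phi : vec n -> R) D1 D2 (c j : 'I_n) (z : vec n) :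
  C2_with phi D1 D2 -> c <> j -> D2 j c z = D2 c j z.
Proof.
move=> [Hc0 [H1 H2]] Hcj.
set P := fun u v => upd (upd z c u) j v.
set f2 := fun u v => phi (P u v).
have Pj : forall u v, P u v j = v by move=> u v; rewrite /P upd_at.
have Pc : forall u v, P u v c = u by move=> u v; rewrite /P upd_ne // upd_at.
have Pj' : forall u v t, upd (P u v) j t = P u t by move=> u v t; rewrite /P upd_same.
have Pc' : forall u v t, upd (P u v) c t = P t v.
  by move=> u v t; rewrite /P !(upd_comm _ c j) // upd_same.
have E1 : forall u v, Derive (fun t => f2 u t) v = D1 j (P u v).
  move=> u v; rewrite /f2.
  have := partial_Derive phi j (D1 j) (P u v) (proj1 (H1 j)).
  rewrite Pj => <-; f_equal; apply functional_extensionality => t; by rewrite Pj'.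
have E2 : forall u v, Derive (fun t => f2 t v) u = D1 c (P u v).
  move=> u v; rewrite /f2.
  have := partial_Derive phi c (D1 c) (P u v) (proj1 (H1 c)).
  rewrite Pc => <-; f_equal; apply functional_extensionality => t; by rewrite Pc'.
have F1 : forall v, (fun w => Derive (fun t => f2 w t) v) = (fun w => D1 j (P w v)).
  move=> v; apply functional_extensionality => w; apply E1.
have F2 : forall u, (fun w => Derive (fun t => f2 t w) u) = (fun w => D1 c (P u w)).
  move=> u; apply functional_extensionality => w; apply E2.
have E3 : forall u v, Derive (fun w => D1 j (P w v)) u = D2 j c (P u v).
  move=> u v.
  have := partial_Derive (D1 j) c (D2 j c) (P u v) (proj1 (H2 j c)).
  rewrite Pc => <-; f_equal; apply functional_extensionality => t; by rewrite Pc'.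
have E4 : forall u v, Derive (fun w => D1 c (P u w)) v = D2 c j (P u v).
  move=> u v.
  have := partial_Derive (D1 c) j (D2 c j) (P u v) (proj1 (H2 c j)).
  rewrite Pj => <-; f_equal; apply functional_extensionality => t; by rewrite Pj'.
have Pz : P (z c) (z j) = z.
  by rewrite /P !upd_self.
have cont : forall k l, continuity_2d_pt (fun u v => D2 k l (P u v)) (z c) (z j).
  move=> k l eps.
  have [d [Hd Hd2]] := proj2 (H2 k l) (P (z c) (z j)) eps (cond_pos eps).
  exists (mkposreal d Hd) => u v /= Hu Hv; apply Hd2 => i.
  rewrite /P /upd; case: (i == j) => //; case: (i == c) => //.
  rewrite Rminus_eq_0 Rabs_R0; lra.
have S := Schwarz f2 (z c) (z j).
rewrite F1 F2 E3 E4 Pz in S.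
rewrite S //.
- exists (mkposreal 1 Rlt_0_1) => u v _ _; split; [|split; [|split]].
  + have := partial_ex phi c (D1 c) (P u v) (proj1 (H1 c)).
    rewrite Pc; apply ex_derive_ext => t; by rewrite /f2 Pc'.
  + have := partial_ex phi j (D1 j) (P u v) (proj1 (H1 j)).
    rewrite Pj; apply ex_derive_ext => t; by rewrite /f2 Pj'.
  + rewrite F1.
    have := partial_ex (D1 j) c (D2 j c) (P u v) (proj1 (H2 j c)).
    rewrite Pc; apply ex_derive_ext => t; by rewrite Pc'.
  + rewrite F2.
    have := partial_ex (D1 c) j (D2 c j) (P u v) (proj1 (H2 c j)).
    rewrite Pj; apply ex_derive_ext => t; by rewrite Pj'.
- have -> : (fun u v => Derive (fun z0 => Derive (fun t => f2 z0 t) v) u) = (fun u v => D2 j c (P u v)).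
    apply functional_extensionality => u; apply functional_extensionality => v; by rewrite F1 E3.
  apply cont.
- have -> : (fun u v => Derive (fun z0 => Derive (fun t => f2 t z0) u) v) = (fun u v => D2 c j (P u v)).
    apply functional_extensionality => u; apply functional_extensionality => v; by rewrite F2 E4.
  apply cont.
Qed.


Lemma mvt_coord {n} (phi : vec n -> R) D1 D2 (j c : 'I_n) (y : vec n) a b H :
  C2_with phi D1 D2 ->
  (forall s, Rmin a b <= s <= Rmax a b -> Rabs (D2 j c (upd y c s)) <= H) ->
  Rabs (D1 j (upd y c b) - D1 j (upd y c a)) <= H * Rabs (b - a).
Proof.
move=> [_ [_ H2]] HB.
have Hd : forall s, derivable_pt_lim (fun s => D1 j (upd y c s)) s (D2 j c (upd y c s)).
  move=> s; have := proj1 (H2 j c) (upd y c s).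
  rewrite upd_at; apply derivable_pt_lim_ext => s'; by rewrite upd_same.
have gen : forall a b, a < b -> (forall s, a <= s <= b -> Rabs (D2 j c (upd y c s)) <= H) ->
   Rabs (D1 j (upd y c b) - D1 j (upd y c a)) <= H * Rabs (b - a).
  move=> a0 b0 Hab HB0.
  have [x [Ex Hx]] := MVT_cor2 _ _ a0 b0 Hab (fun x _ => Hd x).
  rewrite Ex Rabs_mult; apply Rmult_le_compat_r; [apply Rabs_pos|apply HB0; lra].
case: (Rtotal_order a b) => [Hab|[Hab|Hab]].
- apply gen => // s Hs; apply HB; rewrite Rmin_left ?Rmax_right; lra.
- subst; rewrite !Rminus_diag Rabs_R0; lra.
- rewrite -Rabs_Ropp -(Rabs_Ropp (b - a)) !Ropp_minus_distr.
  apply gen => // s Hs; apply HB; rewrite Rmin_right ?Rmax_left; lra.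
Qed.

Lemma cover1 (a b : R) (delta : R -> posreal) :
  exists l : list R, forall x, a <= x <= b ->
    exists t, In t l /\ a <= t <= b /\ Rabs (x - t) < delta t.
Proof.
have := compactness_list 1 (a, tt) (b, tt) (fun q => delta (fst q)).
move=> H; apply NNPP => Hn; apply H => [[l Hl]]; apply Hn.
exists (map fst l) => x Hx.
have [[t u] [Hin [Hb Hc]]] := Hl (x, tt) (conj Hx I).
exists t; split; first by apply (in_map fst l (t, u)).
move: Hb Hc => /= [Hb _] [Hc _]; by split.
Qed.

Lemma fold_min_pos (g : R -> R) (L : list R) : (forall s, 0 < g s) -> 0 < fold_right Rmin 1 (map g L).
Proof. move=> H; elim: L => [|x L IHL] /=; first lra. have := H x; move: IHL; unfold Rmin; case: Rle_dec; lra. Qed.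
Lemma fold_min_le (g : R -> R) (L : list R) s : In s L -> fold_right Rmin 1 (map g L) <= g s.
Proof. elim: L => [|x L IHL] //= [->|Hin]; [apply Rmin_l| apply (Rle_trans _ _ _ (Rmin_r _ _)); by apply IHL]. Qed.
Lemma fold_max_ge (g : R -> R) (L : list R) s : In s L -> g s <= fold_right Rmax 0 (map g L).
Proof. elim: L => [|x L IHL] //= [->|Hin]; [apply Rmax_l| apply (Rle_trans _ _ _ (IHL Hin)); apply Rmax_r]. Qed.

Definition inbox {n} (l u : vec n) (z : vec n) := forall k, l k <= z k <= u k.

Lemma bounded_box {n} (f : vec n -> R) (l u : vec n) :
  continuous_vec f -> exists M, forall z, inbox l u z -> Rabs (f z) <= M.
Proof.
move=> Hf.
have claim : forall r, forall q, inbox l u q -> exists d, 0 < d /\ exists M,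
   forall z, inbox l u z -> (forall k : 'I_n, (r <= k)%N -> Rabs (z k - q k) < d) ->
   Rabs (f z) <= M.
  elim=> [|r IH] q Hq.
  - have [d [Hd Hd2]] := Hf q 1 Rlt_0_1.
    exists d; split => //; exists (Rabs (f q) + 1) => z _ Hz.
    have := Hd2 z (fun k => Hz k isT).
    move=> H; have := Rabs_triang_inv (f z) (f q); lra.
  - case: (ltnP r n) => Hrn; last first.
    + have [d [Hd [M HM]]] := IH q Hq.
      exists d; split => //; exists M => z Hz _; apply HM => // k Hk.
      exfalso; move: (ltn_ord k) => Hk'; have := leq_trans Hrn Hk.
      by rewrite leqNgt Hk'.
    + set c := Ordinal Hrn.
      have Hs : forall s, exists dM : R * R, 0 < fst dM /\ (l c <= s <= u c ->
         forall z, inbox l u z -> (forall k : 'I_n, (r <= k)%N -> Rabs (z k - upd q c s k) < fst dM) ->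
         Rabs (f z) <= snd dM).
        move=> s; case: (classic (l c <= s <= u c)) => Hsc.
        * have Hqs : inbox l u (upd q c s).
            move=> k; rewrite /upd; case: eqP => [->|] //; apply Hq.
          have [d [Hd [M HM]]] := IH _ Hqs.
          by exists (d, M); split => //= _.
        * by exists (1, 0); split => /=; [lra|].
      set dM := fun s => proj1_sig (constructive_indefinite_description _ (Hs s)).
      have HdM : forall s, 0 < fst (dM s) /\ (l c <= s <= u c ->
         forall z, inbox l u z -> (forall k : 'I_n, (r <= k)%N -> Rabs (z k - upd q c s k) < fst (dM s)) ->
         Rabs (f z) <= snd (dM s)).
        move=> s; exact: (proj2_sig (constructive_indefinite_description _ (Hs s))).
      have [L HL] := cover1 (l c) (u c) (fun s => mkposreal _ (proj1 (HdM s))).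
      set d := fold_right Rmin 1 (map (fun s => fst (dM s)) L).
      set M := fold_right Rmax 0 (map (fun s => snd (dM s)) L).
      have Hd : 0 < d by apply fold_min_pos => s; apply HdM.
      have HdL : forall s, In s L -> d <= fst (dM s) by move=> s; apply (fold_min_le (fun s => fst (dM s))).
      have HML : forall s, In s L -> snd (dM s) <= M by move=> s; apply (fold_max_ge (fun s => snd (dM s))).
      exists d; split => //; exists M => z Hz Hk.
      have [s [Hin [Hs1 Hs2]]] := HL (z c) (Hz c).
      apply (Rle_trans (Rabs (f z)) (snd (dM s)) M); last by apply HML.
      apply (proj2 (HdM s)) => // k Hrk.
      case: (eqVneq k c) => [->|Hkc].
      * by rewrite upd_at.
      * rewrite upd_ne; last by apply/eqP.
        have Hrk' : (r.+1 <= k)%N.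
          rewrite ltn_neqAle Hrk andbT; apply/eqP => Heq; move/eqP: Hkc; apply.
          apply val_inj => /=; by rewrite Heq.
        have := Hk k Hrk'; have := HdL s Hin; lra.
case: (classic (exists q, inbox l u q)) => [[q Hq]|Hno].
- have [d [_ [M HM]]] := claim n q Hq.
  exists M => z Hz; apply HM => // k Hk; exfalso.
  by move: (ltn_ord k); rewrite ltnNge Hk.
- exists 0 => z Hz; exfalso; apply Hno; by exists z.
Qed.

Lemma sup_ge (E : R -> Prop) y0 : (exists M, forall y, E y -> y <= M) -> E y0 -> y0 <= sup_R E.
Proof.
move=> [M HM] Hy0.
have [s Hs] := completeness E (ex_intro _ M HM) (ex_intro _ y0 Hy0).
rewrite /sup_R; have := epsilon_spec (inhabits 0) (fun l => is_lub E l) (ex_intro _ s Hs).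
move=> [H _]; by apply H.
Qed.

Lemma sup_le (E : R -> Prop) y0 M : (forall y, E y -> y <= M) -> E y0 -> sup_R E <= M.
Proof.
move=> HM Hy0.
have [s Hs] := completeness E (ex_intro _ M HM) (ex_intro _ y0 Hy0).
rewrite /sup_R; have := epsilon_spec (inhabits 0) (fun l => is_lub E l) (ex_intro _ s Hs).
move=> [_ H]; by apply H.
Qed.


Definition cl (l h x : R) := Rmax l (Rmin h x).
Lemma cl_in l h x : l <= h -> l <= cl l h x <= h.
Proof. rewrite /cl /Rmax /Rmin; repeat case: Rle_dec; lra. Qed.
Lemma cl_id l h x : l <= x <= h -> cl l h x = x.
Proof. rewrite /cl /Rmax /Rmin; repeat case: Rle_dec; lra. Qed.
Lemma cl_pt v x : cl v v x = v.
Proof. rewrite /cl /Rmax /Rmin; repeat case: Rle_dec; lra. Qed.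
Lemma minc u v : (Rmin u v = u /\ u <= v) \/ (Rmin u v = v /\ v < u).
Proof. rewrite /Rmin; case: Rle_dec; [left|right]; lra. Qed.
Lemma maxc u v : (Rmax u v = v /\ u <= v) \/ (Rmax u v = u /\ v < u).
Proof. rewrite /Rmax; case: Rle_dec; [left|right]; lra. Qed.
Lemma cl_step a b l h x : l <= b <= h ->
  Rabs (cl l h x - cl (Rmin a l) (Rmax a h) x) <= Rabs (a - b).
Proof.
move=> Hb; have h1 := Rle_abs (a-b); have h2 := Rle_abs (b - a).
rewrite Rabs_minus_sym in h2; apply Rabs_le; rewrite /cl.
have := minc a l; have := maxc a h; have := minc h x; have := minc (Rmax a h) x.
have := maxc l (Rmin h x); have := maxc (Rmin a l) (Rmin (Rmax a h) x).
intuition lra.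
Qed.

Lemma Rplus_assoc' : associative Rplus. Proof. move=> a b c; by rewrite Rplus_assoc. Qed.
HB.instance Definition _ := Monoid.isComLaw.Build R 0 Rplus Rplus_assoc' Rplus_comm Rplus_0_l.

Lemma sum_step m (F : 'I_m -> R) r (Hr : (r < m)%N) :
  \big[Rplus/0]_(i < m | (i < r.+1)%N) F i = \big[Rplus/0]_(i < m | (i < r)%N) F i + F (Ordinal Hr).
Proof.
rewrite (bigD1 (Ordinal Hr)) /=; last by rewrite ltnSn.
rewrite Rplus_comm; congr (_ + _); apply eq_bigl => i.
rewrite -(inj_eq val_inj) /= ltnS [(i < r)%N]ltn_neqAle andbC //.
Qed.

Section Proc.
Variables (n : nat) (U : 'I_n -> R -> Prop) (p : R -> vec n) (j : 'I_n) (tau t : R)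
  (m : nat) (kk : 'I_m -> 'I_n) (beta dp : 'I_m -> R).
Hypothesis Hproc : async_process U p.
Hypothesis Htau : U j tau.
Hypothesis Htaut : tau < t.
Hypothesis Hbeta_sorted : forall i i' : 'I_m, (i < i')%N -> beta i < beta i'.
Hypothesis Hbeta_in : forall i, tau < beta i < t.
Hypothesis Hbeta_upd : forall i, U (kk i) (beta i).
Hypothesis Hbeta_all : forall k s, tau < s < t -> U k s -> exists i, kk i = k /\ beta i = s.
Hypothesis Hdp : forall i, exists eps, 0 < eps /\
           forall s, beta i < s < beta i + eps -> p s (kk i) = p (beta i) (kk i) + dp i.

Definition bt (q : nat) : R := if (insub q : option 'I_m) is Some i then beta i else t.

Lemma bt_ord (i : 'I_m) : bt i = beta i.
Proof. by rewrite /bt valK. Qed.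

Lemma bt_ge q : (m <= q)%N -> bt q = t.
Proof. move=> H; rewrite /bt insubN //; by rewrite -leqNgt. Qed.

Lemma bt_range q : tau < bt q <= t.
Proof.
rewrite /bt; case: insubP => [i _ _|_]; last lra.
have := Hbeta_in i; lra.
Qed.

Lemma bt_mono q1 q2 : (q1 <= q2)%N -> bt q1 <= bt q2.
Proof.
move=> H; case: (ltnP q2 m) => H2.
- have H1 : (q1 < m)%N by apply: leq_ltn_trans H H2.
  have -> : bt q1 = beta (Ordinal H1) by rewrite /bt insubT.
  have -> : bt q2 = beta (Ordinal H2) by rewrite /bt insubT.
  rewrite leq_eqVlt in H; case/orP: H => [/eqP E|L].
  + have -> : Ordinal H2 = Ordinal H1 by apply val_inj => /=; rewrite E.
    lra.
  + left; by apply Hbeta_sorted.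
- rewrite (bt_ge q2 H2); have := bt_range q1; lra.
Qed.

Lemma bt_lt q : (q < m)%N -> bt q < bt q.+1.
Proof.
move=> H; have -> : bt q = beta (Ordinal H) by rewrite /bt insubT.
rewrite /bt; case: insubP => [i _ Hi|_]; last by have := Hbeta_in (Ordinal H); lra.
apply Hbeta_sorted => /=; by rewrite Hi.
Qed.

Definition estart (q : nat) (u : R) := if q is q'.+1 then bt q' < u else tau <= u.

Lemma no_upd q c u : c <> j -> estart q u -> u < bt q -> ~ U c u.
Proof.
move=> Hcj Hs Hu HU.
have [_ [_ [_ _]]] := Hproc.
case: (Req_dec u tau) => [Eu|Nu].
- subst; apply Hcj; exact: (proj1 Hproc) c j tau HU Htau.
- have Hut : tau < u < t.
    have Hq := bt_range q.
    move: Hs; rewrite /estart; case: q Hu Hq => [|q'] Hu Hq Hs; [lra| have := bt_range q'; lra].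
  have [i [_ Hi]] := Hbeta_all c u Hut HU.
  rewrite -bt_ord in Hi; subst u.
  move: Hs; rewrite /estart; case: q Hu => [|q'] Hu Hs.
  + have := bt_mono 0 i (leq0n i); lra.
  + case: (leqP i q') => Hi.
    * have := bt_mono _ _ Hi; lra.
    * have := bt_mono _ _ Hi; lra.
Qed.

Definition V q := p (bt q).

Lemma epoch q s c : c <> j -> estart q s -> s <= bt q -> p s c = V q c.
Proof.
move=> Hcj Hs Hsb; rewrite /V; symmetry.
have [_ [_ [_ H4]]] := Hproc.
apply H4 => // u Hu; apply (no_upd q) => //; last lra.
rewrite /estart in Hs *; case: q Hs Hsb Hu => [|q'] /= Hs Hsb Hu; lra.
Qed.

Lemma values t' c : tau <= t' <= t -> c <> j -> exists q, (q <= m)%N /\ p t' c = V q c.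
Proof.
move=> Ht' Hcj.
have gen : forall q, (q <= m)%N -> t' <= bt q -> exists q', (q' <= m)%N /\ p t' c = V q' c.
  elim=> [|q IH] Hq Hb.
  - exists 0%N; split => //; apply epoch => //=; lra.
  - case: (Rle_lt_dec t' (bt q)) => H.
    + apply IH => //; by apply ltnW.
    + exists q.+1; split => //; by apply epoch.
apply (gen m) => //; rewrite bt_ge //; lra.
Qed.

Lemma V_step (i : 'I_m) c : c <> j -> V i.+1 c = V i c + (if c == kk i then dp i else 0).
Proof.
move=> Hcj.
have [eps [He Heps]] := Hdp i.
have Hlt := bt_lt i (ltn_ord i); rewrite bt_ord in Hlt.
set s0 := Rmin (beta i + eps / 2) (bt i.+1).
have Hs0 : beta i < s0 <= bt i.+1.
  rewrite /s0; unfold Rmin; case: Rle_dec; lra.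
have Hs0' : s0 < beta i + eps by rewrite /s0; have := Rmin_l (beta i + eps / 2) (bt i.+1); lra.
rewrite -(epoch i.+1 s0 c Hcj); [|rewrite /estart bt_ord; lra|lra].
rewrite /V bt_ord.
case: (eqVneq c (kk i)) => [->|Hc].
- rewrite Heps //; lra.
- rewrite Rplus_0_r.
  have [H1 [_ [_ H4]]] := Hproc.
  apply H4; first lra.
  move=> u Hu HU.
  case: (Req_dec u (beta i)) => [Eu|Nu].
  + subst; move/eqP: Hc; apply; exact: (H1 _ _ _ HU (Hbeta_upd i)).
  + apply (no_upd i.+1 c u Hcj) => //; [rewrite /estart bt_ord; lra | lra].
Qed.

Fixpoint lof (c : 'I_n) (k r : nat) : R :=
  if k is k'.+1 then Rmin (V r c) (lof c k' r.+1) else V r c.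
Fixpoint hif (c : 'I_n) (k r : nat) : R :=
  if k is k'.+1 then Rmax (V r c) (hif c k' r.+1) else V r c.
Definition lo c r := lof c (m - r) r.
Definition hi c r := hif c (m - r) r.

Lemma lof_le c k r q : (r <= q <= r + k)%N -> lof c k r <= V q c.
Proof.
elim: k r => [|k IH] r /=.
- rewrite addn0 => /andP [H1 H2]; have -> : q = r by apply/eqP; rewrite eqn_leq H1 H2.
  lra.
- move=> /andP [H1 H2]; case: (eqVneq q r) => [->|Hqr]; first by apply Rmin_l.
  apply (Rle_trans _ _ _ (Rmin_r _ _)); apply IH.
  rewrite addSnnS H2 andbT ltn_neqAle H1 andbT eq_sym; exact Hqr.
Qed.

Lemma hif_ge c k r q : (r <= q <= r + k)%N -> V q c <= hif c k r.
Proof.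
elim: k r => [|k IH] r /=.
- rewrite addn0 => /andP [H1 H2]; have -> : q = r by apply/eqP; rewrite eqn_leq H1 H2.
  lra.
- move=> /andP [H1 H2]; case: (eqVneq q r) => [->|Hqr]; first by apply Rmax_l.
  apply (Rle_trans _ (hif c k r.+1)); last by apply Rmax_r.
  apply IH.
  rewrite addSnnS H2 andbT ltn_neqAle H1 andbT eq_sym; exact Hqr.
Qed.

Lemma lof_bound c k r C : (forall q, (r <= q <= r + k)%N -> C <= V q c) -> C <= lof c k r.
Proof.
elim: k r => [|k IH] r /= H.
- apply H; by rewrite addn0 leqnn.
- apply Rmin_glb; first by apply H; rewrite leqnn leq_addr.
  apply IH => q /andP [H1 H2]; apply H; rewrite -addSnnS H2 andbT; by apply ltnW.
Qed.

Lemma hif_bound c k r C : (forall q, (r <= q <= r + k)%N -> V q c <= C) -> hif c k r <= C.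
Proof.
elim: k r => [|k IH] r /= H.
- apply H; by rewrite addn0 leqnn.
- apply Rmax_lub; first by apply H; rewrite leqnn leq_addr.
  apply IH => q /andP [H1 H2]; apply H; rewrite -addSnnS H2 andbT; by apply ltnW.
Qed.

Lemma lo_le c r q : (r <= q <= m)%N -> lo c r <= V q c.
Proof. move=> /andP [H1 H2]; apply lof_le; rewrite H1 subnKC //; exact: leq_trans H1 H2. Qed.
Lemma hi_ge c r q : (r <= q <= m)%N -> V q c <= hi c r.
Proof. move=> /andP [H1 H2]; apply hif_ge; rewrite H1 subnKC //; exact: leq_trans H1 H2. Qed.
Lemma lo_bound c r C : (r <= m)%N -> (forall q, (r <= q <= m)%N -> C <= V q c) -> C <= lo c r.
Proof. move=> Hr H; apply lof_bound => q; rewrite subnKC //; apply H. Qed.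
Lemma hi_bound c r C : (r <= m)%N -> (forall q, (r <= q <= m)%N -> V q c <= C) -> hi c r <= C.
Proof. move=> Hr H; apply hif_bound => q; rewrite subnKC //; apply H. Qed.
Lemma lo_S c r : (r < m)%N -> lo c r = Rmin (V r c) (lo c r.+1).
Proof. move=> H; by rewrite /lo -(subnSK H). Qed.
Lemma hi_S c r : (r < m)%N -> hi c r = Rmax (V r c) (hi c r.+1).
Proof. move=> H; by rewrite /hi -(subnSK H). Qed.
Lemma lo_m c : lo c m = V m c. Proof. by rewrite /lo subnn. Qed.
Lemma hi_m c : hi c m = V m c. Proof. by rewrite /hi subnn. Qed.

Lemma box_hull s x c : box p j tau t s x -> c != j -> lo c 0 <= x c <= hi c 0.
Proof.
move=> [_ Hb] Hc; have [H1 H2] := Hb c Hc; have Hcj : c <> j by apply/eqP. split.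
- apply H2 => t' Ht'; have [q [Hq ->]] := values t' c Ht' Hcj.
  apply lo_le; by rewrite Hq.
- apply H1 => t' Ht'; have [q [Hq ->]] := values t' c Ht' Hcj.
  apply hi_ge; by rewrite Hq.
Qed.

Lemma hull_box r s z : (r <= m)%N -> z j = s -> (forall c, c != j -> lo c r <= z c <= hi c r) ->
  box p j (bt r) t s z.
Proof.
move=> Hr Hj Hz; split => // c Hc; have [Z1 Z2] := Hz c Hc; split => C HC.
- apply (Rle_trans _ _ _ Z2); apply hi_bound => // q /andP [H1 H2]; apply HC.
  have := bt_mono _ _ H1; have := bt_range q; lra.
- apply (Rle_trans _ (lo c r)); last exact Z1. apply lo_bound => // q /andP [H1 H2]; apply HC.
  have := bt_mono _ _ H1; have := bt_range q; lra.
Qed.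

Variables (phi : vec n -> R) (D1 : 'I_n -> vec n -> R) (D2 : 'I_n -> 'I_n -> vec n -> R).
Hypothesis Hphi : C2_with phi D1 D2.
Hypothesis Hkk_ne : forall i, kk i <> j.

Definition ypath (x : vec n) r : vec n :=
  fun k => if k == j then p t j else cl (lo k r) (hi k r) (x k).

Lemma lo_hi c r : (r <= m)%N -> lo c r <= hi c r.
Proof.
move=> Hr; apply (Rle_trans _ (V r c)); [apply lo_le|apply hi_ge]; by rewrite leqnn Hr.
Qed.

Lemma ypath_in x r k : (r <= m)%N -> k != j -> lo k r <= ypath x r k <= hi k r.
Proof. move=> Hr Hk; rewrite /ypath (negbTE Hk); apply cl_in; by apply lo_hi. Qed.

Lemma path_step (H : 'I_m -> R) x (i : 'I_m) :
  (forall z, box p j (beta i) t (p t j) z -> Rabs (D2 (kk i) j z) <= H i) ->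
  Rabs (D1 j (ypath x i) - D1 j (ypath x i.+1)) <= H i * Rabs (dp i).
Proof.
move=> HB.
set c := kk i.
have Hcj : c <> j := Hkk_ne i.
have Him : (i < m)%N := ltn_ord i.
have Him' : (i <= m)%N := ltnW Him.
have Hlo : forall k, k != j -> k != c -> lo k i = lo k i.+1 /\ hi k i = hi k i.+1.
  move=> k Hk Hkc.
  have HV : V i.+1 k = V i k.
    rewrite V_step; last by apply/eqP.
    by rewrite /c in Hkc; rewrite (negbTE Hkc) Rplus_0_r.
  rewrite lo_S // hi_S // -HV; split.
  - apply Rmin_right; apply lo_le; by rewrite leqnn Him.
  - apply Rmax_right; apply hi_ge; by rewrite leqnn Him.
set a := ypath x i c. set b := ypath x i.+1 c.
have Ey : ypath x i.+1 = upd (ypath x i) c b.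
  apply functional_extensionality => k; rewrite /b.
  case: (eqVneq k c) => [->|Hkc]; first by rewrite upd_at.
  rewrite upd_ne; last by apply/eqP.
  rewrite /ypath; case: (eqVneq k j) => //= Hk.
  by have [-> ->] := Hlo k Hk Hkc.
have Ey0 : ypath x i = upd (ypath x i) c a by rewrite /a upd_self.
rewrite Ey {1}Ey0 Rabs_minus_sym.
apply (Rle_trans _ (H i * Rabs (b - a))).
- apply mvt_coord with (phi := phi) (D2 := D2) => // s Hs.
  rewrite (D2_sym phi D1 D2 c j) //; apply HB.
  rewrite -bt_ord; apply hull_box => //.
  + rewrite upd_ne; [by rewrite /ypath eqxx | by move=> E; apply Hcj; rewrite E].
  + move=> k Hk; case: (eqVneq k c) => [->|Hkc].
    * rewrite upd_at.
      have Ha := ypath_in x i c Him' (introN eqP Hcj).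
      have Hb := ypath_in x i.+1 c Him (introN eqP Hcj).
      rewrite -/a in Ha; rewrite -/b in Hb.
      have L1 : lo c i <= lo c i.+1 by rewrite (lo_S c i Him); apply Rmin_r.
      have L2 : hi c i.+1 <= hi c i by rewrite (hi_S c i Him); apply Rmax_r.
      move: Hs; rewrite /Rmin /Rmax; repeat case: Rle_dec; lra.
    * rewrite upd_ne; last by apply/eqP.
      by apply ypath_in.
- have HH : 0 <= H i.
    apply (Rle_trans _ (Rabs (D2 (kk i) j (p t)))); first by apply Rabs_pos.
    apply HB; split => // k _; split => C HC; apply HC; have := Hbeta_in i; lra.
  apply Rmult_le_compat_l => //.
  have -> : Rabs (dp i) = Rabs (V i c - V i.+1 c).
    rewrite V_step // /c eqxx -Rabs_Ropp; f_equal; ring.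
  rewrite /a /b /ypath (negbTE (introN eqP Hcj)).
  rewrite (lo_S c i Him) (hi_S c i Him).
  apply cl_step; split; [apply lo_le|apply hi_ge]; by rewrite leqnn Him.
Qed.

Lemma path_bound (H : 'I_m -> R) x :
  box p j tau t (p t j) x ->
  (forall i z, box p j (beta i) t (p t j) z -> Rabs (D2 (kk i) j z) <= H i) ->
  Rabs (D1 j x - D1 j (p t)) <= \big[Rplus/0]_(i < m) (H i * Rabs (dp i)).
Proof.
move=> Hx HB.
have E0 : ypath x 0 = x.
  apply functional_extensionality => k; rewrite /ypath.
  case: (eqVneq k j) => [->|Hk]; first by rewrite (proj1 Hx).
  apply cl_id; exact: box_hull Hx Hk.
have Em : ypath x m = p t.
  apply functional_extensionality => k; rewrite /ypath.
  case: (eqVneq k j) => [->|Hk] //.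
  by rewrite lo_m hi_m cl_pt /V bt_ge.
have gen : forall r, (r <= m)%N -> Rabs (D1 j (ypath x 0) - D1 j (ypath x r)) <=
    \big[Rplus/0]_(i < m | (i < r)%N) (H i * Rabs (dp i)).
  elim=> [|r IH] Hr.
  - rewrite big_pred0 // Rminus_diag Rabs_R0; lra.
  - rewrite sum_step.
    have : Rabs (D1 j (ypath x r) - D1 j (ypath x r.+1)) <= H (Ordinal Hr) * Rabs (dp (Ordinal Hr)) :=
      path_step H x (Ordinal Hr) (HB _).
    have := IH (ltnW Hr).
    have := Rabs_triang (D1 j (ypath x 0) - D1 j (ypath x r)) (D1 j (ypath x r) - D1 j (ypath x r.+1)).
    have -> : D1 j (ypath x 0) - D1 j (ypath x r) + (D1 j (ypath x r) - D1 j (ypath x r.+1)) =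
              D1 j (ypath x 0) - D1 j (ypath x r.+1) by ring.
    move=> *; lra.
have := gen m (leqnn m); rewrite E0 Em => H1.
apply (Rle_trans _ _ _ H1); right; apply eq_bigl => i; by rewrite ltn_ord.
Qed.

End Proc.


Lemma sum_le (I : finType) (P : pred I) (F G : I -> R) :
  (forall i, P i -> F i <= G i) -> \big[Rplus/0]_(i | P i) F i <= \big[Rplus/0]_(i | P i) G i.
Proof. move=> H; apply: (big_ind2 (fun x y => x <= y)) => //; [lra| move=> *; lra]. Qed.

Lemma sum_nonneg (I : finType) (P : pred I) (F : I -> R) :
  (forall i, P i -> 0 <= F i) -> 0 <= \big[Rplus/0]_(i | P i) F i.
Proof. move=> H; apply: (big_ind (fun x => 0 <= x)) => //; [lra| move=> *; lra]. Qed.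

Lemma sum_scal (I : finType) (P : pred I) (F : I -> R) c :
  c * \big[Rplus/0]_(i | P i) F i = \big[Rplus/0]_(i | P i) (c * F i).
Proof.
apply: (big_rec2 (fun x y => c * x = y)); first ring.
move=> i x y _ <-; ring.
Qed.

Lemma bigmin_le_seq (I : eqType) (s : list I) (P : pred I) (F : I -> R) (x0 : R) r :
  r \in s -> P r -> \big[Rmin/x0]_(i <- s | P i) F i <= F r.
Proof.
elim: s => [|a s IH] //; rewrite seq.in_cons big_cons => /orP [/eqP ->|Hr] Pr.
- rewrite Pr; apply Rmin_l.
- case: (P a); last by apply IH.
  apply (Rle_trans _ _ _ (Rmin_r _ _)); by apply IH.
Qed.

Lemma inv_etabar_le n m (kk : 'I_m -> 'I_n) (eta : 'I_m -> R) i :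
  (forall i, 0 < eta i) -> / eta i <= inv_etabar kk eta (kk i).
Proof.
move=> Heta; rewrite /inv_etabar; case: pickP => [i0 Hi0|Hn]; last by have := Hn i; rewrite /= eqxx.
set M := \big[Rmin/eta i0]_(i1 | kk i1 == kk i) eta i1.
have HM : M <= eta i by apply bigmin_le_seq => //; rewrite mem_index_enum.
have HM0 : 0 < M.
  apply: (big_ind (fun x => 0 < x)) => //; move=> x y Hx Hy; rewrite /Rmin; case: Rle_dec; lra.
apply Rinv_le_contravar => //.
Qed.

Lemma inv_etabar_nonneg n m (kk : 'I_m -> 'I_n) (eta : 'I_m -> R) k :
  (forall i, 0 < eta i) -> 0 <= inv_etabar kk eta k.
Proof.
move=> Heta; rewrite /inv_etabar; case: pickP => [i0 Hi0|Hn]; last lra.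
left; apply Rinv_0_lt_compat.
apply: (big_ind (fun x => 0 < x)) => //; move=> x y Hx Hy; rewrite /Rmin; case: Rle_dec; lra.
Qed.

Lemma sum_step2 m (F : 'I_m -> R) (P : pred 'I_m) r (Hr : (r < m)%N) :
  \big[Rplus/0]_(i < m | (i < r.+1)%N && P i) F i =
  \big[Rplus/0]_(i < m | (i < r)%N && P i) F i + (if P (Ordinal Hr) then F (Ordinal Hr) else 0).
Proof.
case HP: (P (Ordinal Hr)).
- rewrite (bigD1 (Ordinal Hr)) /=; last by rewrite ltnSn HP.
  rewrite Rplus_comm; congr (_ + _); apply eq_bigl => i.
  rewrite -(inj_eq val_inj) /= ltnS [(i < r)%N]ltn_neqAle.
  by case: (i <= r)%N; case: (P i); case: (nat_of_ord i == r).
- rewrite Rplus_0_r; apply eq_bigl => i.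
  rewrite ltnS leq_eqVlt; case: (eqVneq (nat_of_ord i) r) => //= E.
  have -> : i = Ordinal Hr by apply val_inj.
  by rewrite HP andbF.
Qed.

Lemma amgm mu d D e H : 0 < D -> 0 < e -> 0 <= H ->
  2 * Rabs mu * (H * Rabs d) <= mu ^ 2 * (H * D / e) + e * H * d ^ 2 / D.
Proof.
move=> HD He HH.
have E1 : mu ^ 2 = Rabs mu ^ 2 by rewrite pow2_abs.
have E2 : d ^ 2 = Rabs d ^ 2 by rewrite pow2_abs.
rewrite E1 E2.
set a := Rabs mu; set b := Rabs d.
have : a ^ 2 * (H * D / e) + e * H * b ^ 2 / D - 2 * a * (H * b) = H * ((a * D - e * b) ^ 2 / (e * D)).
  field; lra.
have : 0 <= H * ((a * D - e * b) ^ 2 / (e * D)).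
  apply Rmult_le_pos => //; apply Rdiv_le_0_compat; [apply pow2_ge_0| nra].
lra.
Qed.


Theorem mainTheorem3
  (n : nat) (phi : vec n -> R) (D1 : 'I_n -> vec n -> R)
  (D2 : 'I_n -> 'I_n -> vec n -> R)
  (U : 'I_n -> R -> Prop) (p : R -> vec n)
  (j : 'I_n) (tau t : R)
  (m : nat) (kk : 'I_m -> 'I_n) (beta prev dp eta : 'I_m -> R)
  (Hphi : C2_with phi D1 D2) (Hconv : convex_fun phi)
  (Hproc : async_process U p)
  (Htau : U j tau) (Ht : U j t) (Htaut : tau < t)
  (Hconsec : forall s, tau < s < t -> ~ U j s)
  (Hbeta_sorted : forall i i' : 'I_m, (i < i')%N -> beta i < beta i')
  (Hbeta_in : forall i, tau < beta i < t)
  (Hbeta_upd : forall i, U (kk i) (beta i))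
  (Hbeta_all : forall k s, tau < s < t -> U k s -> exists i, kk i = k /\ beta i = s)
  (Hkk_ne : forall i, kk i <> j)
  (Hprev_upd : forall i, U (kk i) (prev i))
  (Hprev_lt : forall i, prev i < beta i)
  (Hprev_last : forall i s, prev i < s < beta i -> ~ U (kk i) s)
  (Hdp : forall i, exists eps, 0 < eps /\
           forall s, beta i < s < beta i + eps -> p s (kk i) = p (beta i) (kk i) + dp i)
  (Heta : forall i, 0 < eta i) :
  let gmax := max_over (D1 j) (box p j tau t (p t j)) in
  let gmin := min_over (D1 j) (box p j tau t (p t j)) in
  let A := \big[Rplus/0]_(i < m)
             (eta i * Hbox D2 p (kk i) j (beta i) t (p t j)
                * (dp i) ^ 2 / (beta i - prev i)) in
  let B := \big[Rplus/0]_(k < n | k != j)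
             (inv_etabar kk eta k * Hbox D2 p k j tau t (p t j)) in
  (forall mu : R, Rabs mu * (gmax - gmin) <= 2 * mu ^ 2 * B + A) /\
  (gmax - gmin) ^ 2 <= 8 * A * B.
Proof.
move=> gmax gmin A B.
have [Hp1 [Hp2 [Hp3 Hp4]]] := Hproc.
set l0 : vec n := fun k => if k == j then (p t j) else lo n p t m beta k 0.
set u0 : vec n := fun k => if k == j then (p t j) else hi n p t m beta k 0.
have Hin0 : forall z, box p j tau t (p t j) z -> inbox l0 u0 z.
  move=> z Hz k; rewrite /l0 /u0; case: (eqVneq k j) => [->|Hk].
  - rewrite (proj1 Hz); lra.
  - exact: (box_hull n U p j tau t m kk beta Hproc Htau Htaut Hbeta_sorted Hbeta_in Hbeta_all (p t j) z k Hz Hk).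
have Hbd : forall k l, exists M, forall z, box p j tau t (p t j) z -> Rabs (D2 k l z) <= M.
  move=> k l; have [M HM] := bounded_box (D2 k l) l0 u0 (proj2 (proj2 (proj2 Hphi) k l)).
  exists M => z Hz; apply HM; by apply Hin0.
have Hbd1 : exists M, forall z, box p j tau t (p t j) z -> Rabs (D1 j z) <= M.
  have [M HM] := bounded_box (D1 j) l0 u0 (proj2 (proj1 (proj2 Hphi) j)).
  exists M => z Hz; apply HM; by apply Hin0.
have Hmono : forall t1 z, tau <= t1 -> box p j t1 t (p t j) z -> box p j tau t (p t j) z.
  move=> t1 z Ht1 [Hz1 Hz2]; split => // k Hk; have [S1 S2] := Hz2 k Hk; split => C HC.
  - apply S1 => t' Ht'; apply HC; lra.
  - apply S2 => t' Ht'; apply HC; lra.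
have Hpt : forall t1, t1 <= t -> box p j t1 t (p t j) (p t).
  move=> t1 Ht1; split => // k _; split => C HC; apply HC; lra.
have HboxH : forall k t1 z, tau <= t1 <= t -> box p j t1 t (p t j) z -> Rabs (D2 k j z) <= Hbox D2 p k j t1 t (p t j).
  move=> k t1 z Ht1 Hz; apply sup_ge; last by exists z.
  have [M HM] := Hbd k j; exists M => y [z' [Hz' ->]]; apply HM; apply (Hmono t1) => //; lra.
have HH0 : forall k t1, tau <= t1 <= t -> 0 <= Hbox D2 p k j t1 t (p t j).
  move=> k t1 Ht1; apply (Rle_trans _ (Rabs (D2 k j (p t)))); first by apply Rabs_pos.
  apply HboxH => //; apply Hpt; lra.
have HHmono : forall k t1, tau <= t1 <= t -> Hbox D2 p k j t1 t (p t j) <= Hbox D2 p k j tau t (p t j).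
  move=> k t1 Ht1; apply (sup_le _ (Rabs (D2 k j (p t)))).
  - move=> y [z [Hz ->]]; apply HboxH; [lra| apply (Hmono t1) => //; lra].
  - exists (p t); split => //; apply Hpt; lra.
set Hi := fun i => Hbox D2 p (kk i) j (beta i) t (p t j).
set S := \big[Rplus/0]_(i < m) (Hi i * Rabs (dp i)).
have Hpath : forall x, box p j tau t (p t j) x -> Rabs (D1 j x - D1 j (p t)) <= S.
  move=> x Hx.
  apply (path_bound n U p j tau t m kk beta dp Hproc Htau Htaut Hbeta_sorted Hbeta_in
          Hbeta_upd Hbeta_all Hdp phi D1 D2 Hphi Hkk_ne Hi x Hx).
  move=> i z Hz; apply HboxH => //; have := Hbeta_in i; lra.
have Gmax1 : gmax <= D1 j (p t) + S.
  apply (sup_le _ (D1 j (p t))).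
  - move=> y [z [Hz ->]]; have := Hpath z Hz; move/Rabs_le_between; lra.
  - exists (p t); split => //; apply Hpt; lra.
have Gmax2 : D1 j (p t) <= gmax.
  apply sup_ge; last by exists (p t); split => //; apply Hpt; lra.
  have [M HM] := Hbd1; exists M => y [z [Hz ->]]; have := HM z Hz; move/Rabs_le_between; lra.
have Gmin1 : D1 j (p t) - S <= gmin.
  rewrite /gmin /min_over /inf_R.
  suff : sup_R (fun x => exists p', box p j tau t (p t j) p' /\ - x = D1 j p') <= S - D1 j (p t) by lra.
  apply (sup_le _ (- D1 j (p t))).
  - move=> y [z [Hz Hy]]; have := Hpath z Hz; move/Rabs_le_between; lra.
  - exists (p t); split; [apply Hpt; lra| ring].
have Gmin2 : gmin <= D1 j (p t).
  rewrite /gmin /min_over /inf_R.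
  suff : - D1 j (p t) <= sup_R (fun x => exists p', box p j tau t (p t j) p' /\ - x = D1 j p') by lra.
  apply sup_ge; last by exists (p t); split; [apply Hpt; lra| ring].
  have [M HM] := Hbd1; exists M => y [z [Hz Hy]]; have := HM z Hz; move/Rabs_le_between; lra.
set Dg := gmax - gmin.
have HD0 : 0 <= Dg by rewrite /Dg; lra.
have HDS : Dg <= 2 * S by rewrite /Dg; lra.
set Del := fun i => beta i - prev i.
have HDel : forall i, 0 < Del i <= 1.
  move=> i; rewrite /Del; have := Hprev_lt i; split; first lra.
  have := Hp3 (kk i) (prev i) (beta i) (Hprev_upd i) (Hbeta_upd i) (Hprev_lt i) (Hprev_last i); lra.
have Htt : t - tau <= 1 by apply (Hp3 j tau t Htau Ht Htaut Hconsec).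
have HDsum : forall k, \big[Rplus/0]_(i < m | kk i == k) Del i <= 2.
  move=> k.
  have gen : forall N, (N <= m)%N -> forall E, tau - 1 <= E ->
      (forall i : 'I_m, (i < N)%N -> kk i = k -> beta i <= E) ->
      \big[Rplus/0]_(i < m | (i < N)%N && (kk i == k)) Del i <= E - (tau - 1).
    elim=> [|N IH] HN E HE Hb.
    - rewrite big_pred0 //; lra.
    - rewrite (sum_step2 m Del (fun i => kk i == k) N HN).
      set i0 := Ordinal HN.
      case: (eqVneq (kk i0) k) => Hk /=.
      + have Hb0 : beta i0 <= E by apply Hb => //=; rewrite ltnS.
        have H1 : tau - 1 <= prev i0 by have := HDel i0; have := Hbeta_in i0; rewrite /Del; lra.
        have H2 : forall i : 'I_m, (i < N)%N -> kk i = k -> beta i <= prev i0.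
          move=> i Hil Hki; apply Rnot_lt_le => Hlt.
          have Hlt2 : beta i < beta i0 by apply Hbeta_sorted.
          apply (Hprev_last i0 (beta i)); [lra| rewrite Hk -Hki; apply Hbeta_upd].
        apply (Rle_trans _ (prev i0 - (tau - 1) + Del i0)).
        * apply Rplus_le_compat_r; exact: (IH (ltnW HN) (prev i0) H1 H2).
        * rewrite /Del; lra.
      + rewrite Rplus_0_r; apply IH => //; first by apply ltnW.
        move=> i Hil Hki; apply Hb => //; by apply ltnW.
  have := gen m (leqnn m) t ltac:(lra) ltac:(move=> i _ _; have := Hbeta_in i; lra).
  have -> : \big[Rplus/0]_(i < m | (i < m)%N && (kk i == k)) Del i = \big[Rplus/0]_(i < m | kk i == k) Del i.
    by apply eq_bigl => i; rewrite ltn_ord.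
  lra.
have HB0 : 0 <= B.
  apply sum_nonneg => k _; apply Rmult_le_pos; [by apply inv_etabar_nonneg| apply HH0; lra].
have Hkey : \big[Rplus/0]_(i < m) (Hi i * Del i / eta i) <= 2 * B.
  apply (Rle_trans _ (\big[Rplus/0]_(i < m)
      (inv_etabar kk eta (kk i) * Hbox D2 p (kk i) j tau t (p t j) * Del i))).
  - apply sum_le => i _.
    have := inv_etabar_le n m kk eta i Heta; have := Heta i; have := HDel i.
    have := HHmono (kk i) (beta i) ltac:(have := Hbeta_in i; lra).
    have := HH0 (kk i) (beta i) ltac:(have := Hbeta_in i; lra).
    rewrite /Hi => h1 h2 h3 h4 h5.
    rewrite /Rdiv Rmult_assoc (Rmult_comm (Del i)) -Rmult_assoc.
    apply Rmult_le_compat_r; first lra.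
    rewrite Rmult_comm; apply Rmult_le_compat => //.
    + left; by apply Rinv_0_lt_compat.
  - rewrite (partition_big kk (fun k => k != j)); last by move=> i _; apply/eqP.
    rewrite /B sum_scal; apply sum_le => k Hk.
    have -> : \big[Rplus/0]_(i < m | true && (kk i == k))
        (inv_etabar kk eta (kk i) * Hbox D2 p (kk i) j tau t (p t j) * Del i) =
       (inv_etabar kk eta k * Hbox D2 p k j tau t (p t j)) * \big[Rplus/0]_(i < m | kk i == k) Del i.
      rewrite sum_scal; apply eq_big => // i /eqP ->; ring.
    have := HDsum k; have : 0 <= inv_etabar kk eta k * Hbox D2 p k j tau t (p t j).
      apply Rmult_le_pos; [by apply inv_etabar_nonneg| apply HH0; lra].
    nra.
have Part1 : forall mu, Rabs mu * Dg <= 2 * mu ^ 2 * B + A.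
  move=> mu.
  have HA : 2 * Rabs mu * S <= mu ^ 2 * \big[Rplus/0]_(i < m) (Hi i * Del i / eta i) + A.
    rewrite /S /A sum_scal sum_scal -big_split.
    apply sum_le => i _.
    have := amgm mu (dp i) (Del i) (eta i) (Hi i) (proj1 (HDel i)) (Heta i)
       (HH0 (kk i) (beta i) ltac:(have := Hbeta_in i; lra)).
    rewrite /Del /Hi => h; apply (Rle_trans _ _ _ h); right; reflexivity.
  have := Rabs_pos mu; have : 0 <= mu ^ 2 by apply pow2_ge_0.
  nra.
split => //.
fold Dg.
have HA0 : 0 <= A by have := Part1 0; rewrite Rabs_R0; lra.
case: (Req_dec B 0) => HB.
- case: (Req_dec Dg 0) => HDz; first by rewrite HDz HB; lra.
  have := Part1 ((A + 1) / Dg); rewrite HB Rabs_pos_eq; last first.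
    apply Rdiv_le_0_compat; lra.
  have -> : (A + 1) / Dg * Dg = A + 1 by field.
  lra.
- have HBp : 0 < B by lra.
  have := Part1 (Dg / (4 * B)); rewrite Rabs_pos_eq; last by apply Rdiv_le_0_compat; lra.
  have -> : 2 * (Dg / (4 * B)) ^ 2 * B = Dg * Dg / (8 * B) by field; lra.
  move=> h.
  have h2 : Dg * Dg / (8 * B) <= A.
    have -> : Dg * Dg / (8 * B) = Dg / (4 * B) * Dg - Dg * Dg / (8 * B) by field; lra.
    lra.
  have -> : Dg ^ 2 = 8 * B * (Dg * Dg / (8 * B)) by field; lra.
  nra.
Qed.
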